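(* Let $Y$ be a solid vector space and $(X,d)$ a cone metric space over $Y$. Then $(X,d)$ is complete if and only if every nested sequence $\overline U(x_1,r_1)\supseteq\overline U(x_2,r_2)\supseteq\cdots$ of closed balls in $X$ with $r_n\to0$ in $Y$ has nonempty intersection.
   Context: Vector space with convergence: a real vector space $Y$ with a relation $\to$ between sequences in $Y$ and points of $Y$ (uniqueness of limits not assumed) such that (C1) $x_n\to x$, $y_n\to y$ imply $x_n+y_n\to x+y$; (C2) $x_n\to x$, $\lambda\in\mathbb R$ imply $\lambda x_n\to\lambda x$; (C3) $\lambda_n\to\lambda$ in $\mathbb R$ imply $\lambda_n x\to\lambda x$. $A\subseteq Y$ is open if $x_n\to x\in A$ implies $x_n\in A$ for all but finitely many $n$; closed if $x_n\to x$, $x_n\in A$ $\forall n$ imply $x\in A$; $A^\circ$ is the union of all open subsets of $A$. A cone is a nonempty closed $K$ with $\lambda K\subseteq K$ ($\lambda\ge0$), $K+K\subseteq K$, $K\cap(-K)=\{0\}$; solid if $K\ne\{0\}$, $K^\circ\neq\emptyset$. A vector ordering is a partial order $\preceq$ with (V1) $x\preceq y\Rightarrow x+z\preceq y+z$; (V2) $\lambda\ge0$, $x\preceq y\Rightarrow\lambda x\preceq\lambda y$; (V3) $x_n\to x$, $y_n\to y$, $x_n\preceq y_n$ $\forall n\Rightarrow x\preceq y$. Solid vector space: positive cone $K=\{x:x\succeq 0\}$ solid, with $x\prec y$ iff $y-x\in K^\circ$. Cone metric space over $Y$: nonempty $X$ with $d\colon X\times X\to Y$, $d(x,y)\succeq0$,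 $d(x,y)=0$ iff $x=y$, $d(x,y)=d(y,x)$, $d(x,y)\preceq d(x,z)+d(z,y)$. $X$ carries the topology with basis $U(x,r)=\{y:d(y,x)\prec r\}$ ($r\succ0$), so $x_n\to x$ iff for each $c\succ0$, $d(x_n,x)\prec c$ for all but finitely many $n$. Closed ball $\overline U(x,r)=\{y:d(y,x)\preceq r\}$ for $r\succeq0$. Cauchy: for every $c\succ0$ there is $N$ with $d(x_n,x_m)\prec c$ for $n,m>N$; complete: every Cauchy sequence converges. *)

(* Defs.v *)
From HB Require Import structures.
From mathcomp Require Import all_boot all_order all_algebra.
From mathcomp Require Import reals.
Set Implicit Arguments. Unset Strict Implicit. Unset Printing Implicit Defensive.
Import Order.TTheory GRing.Theory Num.Theory.
Local Open Scope ring_scope.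

Section VSConv.
Variables (R : realType) (Y : lmodType R).

Definition real_cvg (lam : nat -> R) (l : R) : Prop :=
  forall eps : R, 0 < eps -> exists N : nat, forall n : nat, (N <= n)%N -> `|lam n - l| < eps.

Variable conv : (nat -> Y) -> Y -> Prop.

Definition conv_vs_axioms : Prop :=
  [/\ (forall x y a b, conv x a -> conv y b -> conv (fun n => x n + y n) (a + b)),
      (forall x a (lam : R), conv x a -> conv (fun n => lam *: x n) (lam *: a)) &
      (forall (lam : nat -> R) (l : R) (x : Y), real_cvg lam l ->
          conv (fun n => lam n *: x) (l *: x))].

Definition is_open (A : Y -> Prop) : Prop :=
  forall (x : nat -> Y) (a : Y), conv x a -> A a ->
    exists N : nat, forall n : nat, (N <= n)%N -> A (x n).

Definition is_closed (A : Y -> Prop) : Prop :=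
  forall (x : nat -> Y) (a : Y), conv x a -> (forall n, A (x n)) -> A a.

Definition interior (A : Y -> Prop) : Y -> Prop :=
  fun y => exists U : Y -> Prop, [/\ is_open U, (forall z, U z -> A z) & U y].

Definition is_cone (K : Y -> Prop) : Prop :=
  [/\ (exists y, K y), is_closed K,
      (forall (lam : R) y, 0 <= lam -> K y -> K (lam *: y)),
      (forall y z, K y -> K z -> K (y + z)) &
      (forall y, K y -> K (- y) -> y = 0)].

Definition solid_cone (K : Y -> Prop) : Prop :=
  [/\ is_cone K, (exists y, K y /\ y <> 0) & (exists y, interior K y)].

Variable le : Y -> Y -> Prop.

Definition vector_ordering : Prop :=
  [/\ (forall x, le x x),
      (forall x y, le x y -> le y x -> x = y) &
      (forall x y z, le x y -> le y z -> le x z)] /\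
  [/\ (forall x y z, le x y -> le (x + z) (y + z)),
      (forall (lam : R) x y, 0 <= lam -> le x y -> le (lam *: x) (lam *: y)) &
      (forall x y a b, conv x a -> conv y b -> (forall n, le (x n) (y n)) -> le a b)].

Definition pos_cone : Y -> Prop := fun y => le 0 y.

Definition solid_vector_space : Prop :=
  [/\ conv_vs_axioms, vector_ordering & solid_cone pos_cone].

Definition slt (x y : Y) : Prop := interior pos_cone (y - x).

Variables (X : Type) (d : X -> X -> Y).

Definition cone_metric : Prop :=
  [/\ inhabited X,
      (forall x y, le 0 (d x y)),
      (forall x y, d x y = 0 <-> x = y),
      (forall x y, d x y = d y x) &
      (forall x y z, le (d x y) (d x z + d z y))].

Definition cm_converges (x : nat -> X) (a : X) : Prop :=
  forall c : Y, slt 0 c -> exists N : nat, forall n : nat, (N <= n)%N -> slt (d (x n) a) c.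

Definition cm_cauchy (x : nat -> X) : Prop :=
  forall c : Y, slt 0 c -> exists N : nat, forall n m : nat, (N < n)%N -> (N < m)%N ->
    slt (d (x n) (x m)) c.

Definition cm_complete : Prop :=
  forall x : nat -> X, cm_cauchy x -> exists a : X, cm_converges x a.

Definition closed_ball (x : X) (r : Y) : X -> Prop := fun y => le (d y x) r.

Definition nested_balls_property : Prop :=
  forall (x : nat -> X) (r : nat -> Y),
    (forall n, le 0 (r n)) ->
    (forall n y, closed_ball (x n.+1) (r n.+1) y -> closed_ball (x n) (r n) y) ->
    conv r 0 ->
    exists z : X, forall n, closed_ball (x n) (r n) z.

End VSConv.

(* Main.v *)
Require Import Defs.
From HB Require Import structures.
From mathcomp Require Import all_boot all_order all_algebra.
From mathcomp Require Import reals.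
From Stdlib Require Import ClassicalEpsilon.
From mathcomp Require Import ring.
Import Order.TTheory GRing.Theory Num.Theory.
Local Open Scope ring_scope.

Lemma half_cvg (R : realType) : real_cvg (fun n => (2^-1 : R)^+n) 0.
Proof.
move=> e e0; exists (Num.Def.archi_bound e^-1) => n hn.
have : 0 <= e^-1 by rewrite invr_ge0 ltW.
move=> /archi_boundP.
rewrite subr0 exprVn ger0_norm ?invr_ge0 ?exprn_ge0 // => h.
rewrite invf_plt ?posrE ?exprn_gt0 //.
apply: (lt_trans h); rewrite -natrX ltr_nat.
exact: leq_ltn_trans hn (ltn_expl _ _).
Qed.

Fixpoint accum (f : nat -> nat) (k : nat) : nat :=
  match k with 0 => f 0%N | k'.+1 => maxn (accum f k') (f k) end.

Lemma accum_ge f k : (f k <= accum f k)%N.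
Proof. by case: k => [|k] //=; rewrite leq_maxr. Qed.

Lemma accum_mono f k l : (k <= l)%N -> (accum f k <= accum f l)%N.
Proof.
elim: l => [|l IH]; first by rewrite leqn0 => /eqP ->.
rewrite leq_eqVlt => /orP [/eqP -> //|]; rewrite ltnS => /IH h.
by apply: (leq_trans h); rewrite /= leq_maxl.
Qed.

Section Helpers.
Set Implicit Arguments.
Variables (R : realType) (Y : lmodType R) (conv : (nat -> Y) -> Y -> Prop) (le : Y -> Y -> Prop).
Hypothesis HY : solid_vector_space conv le.

Lemma C1 x y a b : conv x a -> conv y b -> conv (fun n => x n + y n) (a + b).
Proof. by move: HY => [[h1 h2 h3] _ _]; auto. Qed.
Lemma C2 x a (lam : R) : conv x a -> conv (fun n => lam *: x n) (lam *: a).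
Proof. by move: HY => [[h1 h2 h3] _ _]; auto. Qed.
Lemma C3 (lam : nat -> R) l v : real_cvg lam l -> conv (fun n => lam n *: v) (l *: v).
Proof. by move: HY => [[h1 h2 h3] _ _]; auto. Qed.
Lemma le_refl x : le x x. Proof. move: HY => [_ [[h1 h2 h3] _] _]; eauto. Qed.
Lemma le_trans x y z : le x y -> le y z -> le x z. Proof. move: HY => [_ [[h1 h2 h3] _] _]; eauto. Qed.
Lemma le_addr x y z : le x y -> le (x + z) (y + z). Proof. move: HY => [_ [_ [h1 h2 h3]] _]; eauto. Qed.
Lemma le_scale (lam : R) x y : 0 <= lam -> le x y -> le (lam *: x) (lam *: y).
Proof. move: HY => [_ [_ [h1 h2 h3]] _]; eauto. Qed.
Lemma le_lim x y a b : conv x a -> conv y b -> (forall n, le (x n) (y n)) -> le a b.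
Proof. move: HY => [_ [_ [h1 h2 h3]] _]; eauto. Qed.

Lemma cvg_cst v : conv (fun _ => v) v.
Proof.
have := @C3 (fun _ => 1) 1 v.
rewrite scale1r; apply => e e0; exists 0%N => n _; by rewrite subrr normr0.
Qed.

Lemma le_add x y x' y' : le x y -> le x' y' -> le (x + x') (y + y').
Proof.
move=> h h'; apply: (le_trans (le_addr x' h)).
by rewrite (addrC y) (addrC y); apply: le_addr.
Qed.

Lemma le_sub x y : le x y -> le 0 (y - x).
Proof. by move/(le_addr (- x)); rewrite subrr. Qed.
Lemma sub_le x y : le 0 (y - x) -> le x y.
Proof. by move/(le_addr x); rewrite add0r subrK. Qed.

Lemma int_K v : interior conv (pos_cone le) v -> le 0 v.
Proof. by case=> U [_ h /h]. Qed.

Lemma slt_le x y : slt conv le x y -> le x y.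
Proof. by move/int_K/sub_le. Qed.

Lemma le_slt x y c : le x y -> slt conv le y c -> slt conv le x c.
Proof.
move=> hxy [U [oU sU Uc]].
exists (fun z => U (z - (y - x))); split.
- move=> s a cs Ua.
  have [N HN] := oU _ _ (C1 cs (cvg_cst (- (y - x)))) Ua.
  by exists N.
- move=> z /sU hz; have := le_add hz (le_sub hxy).
  by rewrite add0r subrK.
- by rewrite opprB addrA subrK.
Qed.

Lemma slt_eventually r c : conv r 0 -> slt conv le 0 c ->
  exists N, forall n, (N <= n)%N -> slt conv le (r n) c.
Proof.
move=> cr [U [oU sU Uc]].
have cv := C1 (cvg_cst c) (C2 (-1) cr).
rewrite scaler0 addr0 in cv.
rewrite subr0 in Uc.
have [N HN] := oU _ _ cv Uc.
exists N => n /HN h; exists U; split => //.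
by rewrite scaleN1r in h.
Qed.

Lemma slt_scale (lam : R) c : 0 < lam -> slt conv le 0 c -> slt conv le 0 (lam *: c).
Proof.
move=> l0 [U [oU sU Uc]]; rewrite subr0 in Uc *.
have lne : lam != 0 by rewrite gt_eqF.
exists (fun z => U (lam^-1 *: z)); split.
- move=> s a cs Ua.
  have [N HN] := oU _ _ (C2 lam^-1 cs) Ua.
  by exists N.
- move=> z /sU hz; have := @le_scale lam _ _ (ltW l0) hz.
  by rewrite scaler0 scalerA divff // scale1r.
- by rewrite subr0 scalerA mulVf // scale1r.
Qed.

End Helpers.
Arguments C1 {R Y conv le} HY {x y a b}.
Arguments C2 {R Y conv le} HY {x a} lam.
Arguments C3 {R Y conv le} HY {lam l} v.
Arguments le_trans {R Y conv le} HY {x y z}.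
Arguments le_addr {R Y conv le} HY {x y} z.
Arguments le_lim {R Y conv le} HY {x y a b}.
Arguments cvg_cst {R Y conv le} HY v.
Arguments le_add {R Y conv le} HY {x y x' y'}.
Arguments slt_le {R Y conv le} HY {x y}.
Arguments le_slt {R Y conv le} HY {x y c}.
Arguments slt_eventually {R Y conv le} HY {r c}.
Arguments slt_scale {R Y conv le} HY {lam c}.

Theorem theorem9p22 (R : realType) (Y : lmodType R)
  (conv : (nat -> Y) -> Y -> Prop) (le : Y -> Y -> Prop)
  (HY : solid_vector_space conv le)
  (X : Type) (d : X -> X -> Y) (Hd : cone_metric le d) :
  cm_complete conv le d <-> nested_balls_property conv le d.
Proof.
have [_ d0 deq dsym dtri] := Hd.
have [_ _ [_ _ [c0 Ic0]]] := HY.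
have hc0 : slt conv le 0 c0 by rewrite /slt subr0.
have h2 : (0 : R) < 2^-1 by rewrite invr_gt0.
split.
- move=> Hc x r r0 nest cr.
  have chain : forall n k w, closed_ball le d (x (n + k)%N) (r (n + k)%N) w ->
      closed_ball le d (x n) (r n) w.
    move=> n; elim=> [|k IH] w; first by rewrite addn0.
    by rewrite addnS => /nest /IH.
  have dxm : forall n m, (n <= m)%N -> le (d (x m) (x n)) (r n).
    move=> n m hnm; apply: (chain n (m - n)%N); rewrite subnKC //.
    by rewrite /closed_ball (proj2 (deq _ _) erefl).
  have [a Ha] : exists a, cm_converges conv le d x a.
    apply: Hc => c hc.
    have [N HN] := slt_eventually HY cr hc.
    exists N => n m hn hm.
    case: (leqP n m) => h.
      by rewrite dsym; apply: (le_slt HY (dxm n m h) (HN n (ltnW hn))).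
    exact: (le_slt HY (dxm m n (ltnW h)) (HN m (ltnW hm))).
  exists a => n.
  have key : forall c, slt conv le 0 c -> le (d a (x n)) (c + r n).
    move=> c hc; have [N HN] := Ha c hc.
    apply: (le_trans HY (dtri a (x n) (x (maxn N n)))).
    apply: (le_add HY).
      by rewrite dsym; apply: (slt_le HY); apply: HN; rewrite leq_maxl.
    by apply: dxm; rewrite leq_maxr.
  have cv := C1 HY (C3 HY c0 (half_cvg R)) (cvg_cst HY (r n)).
  rewrite scale0r add0r in cv.
  apply: (le_lim HY (cvg_cst HY (d a (x n))) cv) => k.
  apply: key; apply: (slt_scale HY _ hc0).
  by rewrite exprn_gt0.
- move=> Hn x hx.
  pose r := fun k : nat => (2^-1 : R)^+k *: c0.
  have rpos : forall k, slt conv le 0 (r k).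
    by move=> k; apply: (slt_scale HY _ hc0); rewrite exprn_gt0.
  have rS : forall k, r k.+1 + r k.+1 = r k.
    move=> k; rewrite /r -scalerDl; congr (_ *: _).
    rewrite exprS -mulrDl -[in RHS](mul1r ((2^-1 : R)^+k)); congr (_ * _).
    by rewrite -mulr2n; field.
  have rle : forall k, le 0 (r k) by move=> k; apply: (slt_le HY).
  have [M HM] : exists M : nat -> nat, forall k n m, (M k < n)%N -> (M k < m)%N ->
      slt conv le (d (x n) (x m)) (r k).
    exists (fun k => proj1_sig (constructive_indefinite_description _ (hx _ (rpos k)))).
    move=> k; exact: (proj2_sig (constructive_indefinite_description _ (hx _ (rpos k)))).
  pose nk := accum (fun j => M j.+1).
  have hnk : forall k, (M k.+1 <= nk k)%N by move=> k; apply: (accum_ge (fun j => M j.+1)).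
  pose y := fun k => x (nk k).+1.
  have cr : conv r 0.
    by have := C3 HY c0 (half_cvg R); rewrite scale0r.
  have [z Hz] : exists z, forall n, closed_ball le d (y n) (r n) z.
    apply: Hn => // k w hw.
    rewrite /closed_ball -rS.
    apply: (le_trans HY (dtri w (y k) (y k.+1))); apply: (le_add HY hw).
    apply: (slt_le HY); apply: HM.
      rewrite ltnS; apply: (leq_trans (hnk k)).
      exact: (accum_mono _ _ _ (leqnSn k)).
    by rewrite ltnS.
  exists z => e he.
  have [K0 HK] := slt_eventually HY cr he.
  exists (nk K0.+1).+1 => n hn.
  apply: (le_slt HY _ (HK K0 (leqnn _))).
  rewrite -rS.
  apply: (le_trans HY (dtri (x n) z (y K0.+1))); apply: (le_add HY).
    apply: (le_trans HY (slt_le HY (HM K0.+2 n (nk K0.+1).+1 _ _))).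
    + exact: leq_ltn_trans (hnk K0.+1) hn.
    + by rewrite ltnS.
    + rewrite -(rS K0.+1).
      by have := le_addr HY (r K0.+2) (rle K0.+2); rewrite add0r.
  by rewrite dsym; apply: Hz.
Qed.
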